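(* As an abelian group, $H=F[1/t]$ is free.
   Context: $F\subseteq\mathbb{Q}[t]$ is the ring of numerical polynomials (polynomials $f$ with $f(n)\in\mathbb{Z}$ for all integers $n\gg0$), and $H=F[1/t]$ is its localization at $t$, viewed as a subring of $\mathbb{Q}[t,1/t]$. *)

(* Defs.v *)
From HB Require Import structures.
From mathcomp Require Import all_boot all_order all_algebra fraction.
Set Implicit Arguments. Unset Strict Implicit. Unset Printing Implicit Defensive.
Import Order.TTheory GRing.Theory Num.Theory.
Local Open Scope ring_scope.

(* Q(t): rational functions over Q; the Laurent ring Q[t,1/t] sits inside. *)
Definition Qt := {fraction {poly rat}}.

Definition numerical (f : {poly rat}) : Prop :=
  exists N : int, forall n : int, (N <= n)%R -> f.[n%:~R] \is a Num.int.

(* H = F[1/t] = { f / t^k : f numerical, k in nat } as a subset of Q[t,1/t]. *)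
Definition inH (x : Qt) : Prop :=
  exists (f : {poly rat}) (k : nat), numerical f /\ x = @FracField.tofrac _ f / (@FracField.tofrac _ 'X) ^+ k.

Definition free_abelian_with_basis (V : zmodType) (S B : V -> Prop) : Prop :=
  (forall b, B b -> S b) /\
  (forall (s : seq V) (c : V -> int), uniq s -> (forall b, b \in s -> B b) ->
     \sum_(b <- s) b *~ c b = 0 -> forall b, b \in s -> c b = 0) /\
  (forall x, S x -> exists (s : seq V) (c : V -> int),
     (forall b, b \in s -> B b) /\ x = \sum_(b <- s) b *~ c b).

Definition free_abelian (V : zmodType) (S : V -> Prop) : Prop :=
  exists B : V -> Prop, free_abelian_with_basis S B.

(* Main.v *)
Require Import Defs.
From HB Require Import structures.
From mathcomp Require Import all_boot all_order all_algebra fraction.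
From mathcomp Require Import ring zify.
From Stdlib Require Import ClassicalEpsilon.
Set Implicit Arguments. Unset Strict Implicit. Unset Printing Implicit Defensive.
Import Order.TTheory GRing.Theory Num.Theory.
Local Open Scope ring_scope.
Notation ZP := (polyOver Num.int_num_subdef).
Lemma fr1 (F : fieldType) (a b t : F) k l : t != 0 ->
  a / t ^+ k - b / t ^+ l = (t ^+ l * a - t ^+ k * b) / (t ^+ k * t ^+ l).
Proof. move=> t0; field; by rewrite ?expf_neq0. Qed.
Lemma fr2 (F : fieldType) (a t : F) J : t != 0 ->
  a / t ^+ J = (a * t) / (t ^+ J * t).
Proof. by move=> t0; rewrite invfM mulrACA mulfV // mulr1. Qed.
Lemma fr3 (F : fieldType) (a b t : F) J k : t != 0 ->
  a / t ^+ J = b / t ^+ k -> a * t ^+ k = b * t ^+ J.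
Proof.
move=> t0 e.
have tJ : t ^+ J != 0 by rewrite expf_neq0.
have tk : t ^+ k != 0 by rewrite expf_neq0.
have -> : a = b / t ^+ k * t ^+ J by rewrite -e divfK.
by rewrite mulrAC divfK.
Qed.
Lemma fr4 (F : fieldType) (b t : F) k m : t != 0 ->
  b / t ^+ k = (t ^+ m * b) / (t ^+ k * t ^+ m).
Proof.
move=> t0; have tm : t ^+ m != 0 by rewrite expf_neq0.
by rewrite invfM [(t ^+ k)^-1 * _]mulrC mulrACA mulfV // mul1r.
Qed.


Lemma divz_int (a b : int) : b != 0 -> (b %| a)%Z -> (a%:~R / b%:~R : rat) \is a Num.int.
Proof.
move=> b0; rewrite dvdz_eq => /eqP <-; rewrite intrM mulfK ?intr_eq0 //.
Qed.

Lemma LG (d : nat) (a s : int) (K : {poly rat}) : s != 0 -> (size K <= d.+1)%N ->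
  (forall j : nat, (j <= d)%N -> K.[(a + s * j%:Z)%:~R] \is a Num.int) ->
  ((s ^+ d * (d`! ^ d)%:Z)%:~R *: K) \is a ZP.
Proof.
move=> s0 sK hK.
pose x := fun j : nat => ((a + s * j%:Z)%:~R : rat).
have xinj : injective x.
  move=> i j /eqP; rewrite /x eqr_int => /eqP /addrI.
  by move=> /(mulfI s0) [].
rewrite [K](@lagrange_gen _ d.+1 x) // scaler_sumr.
apply: rpred_sum => i _.
rewrite lagrangeE /=.
set P := \prod_(_ < _ | _) _.
rewrite mulrA -polyCM scalerAl scale_polyC mul_polyC.
apply: polyOverZ; last first.
  apply: rpred_prod => j _; rewrite polyOverXsubC; exact: intr_int.
rewrite mulrC -mulrA; apply: rpredM; first by apply: hK; rewrite -ltnS.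
have -> : P.[x i] = \prod_(j < d.+1 | j != i) (s * (i%:Z - j%:Z))%:~R.
  rewrite /P horner_prod; apply: eq_bigr => j _.
  by rewrite hornerXsubC /x -intrB; congr intmul; ring.
have -> : ((s ^+ d * (d`! ^ d)%:Z)%:~R : rat) = \prod_(j < d.+1 | j != i) (s * (d`!)%:Z)%:~R.
  rewrite prodr_const cardC1 card_ord /= -rmorphXn /=; congr intmul.
  by rewrite exprMn -natz natrX natz.
rewrite mulrC -prodf_div; apply: rpred_prod => j ji.
rewrite !intrM invfM mulrACA mulfV ?intr_eq0 // mul1r.
apply: divz_int.
  by rewrite subr_eq0 eqz_nat; apply: contra ji => /eqP h; apply/eqP/val_inj.
rewrite /dvdz; apply: dvdn_fact; apply/andP; split.
  rewrite absz_gt0 subr_eq0 eqz_nat; apply: contra ji => /eqP h; exact/eqP/val_inj.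
have := ltn_ord i; have := ltn_ord j; lia.
  by []. exact: xinj.
Qed.


Lemma int_divz (a b : int) : b != 0 -> (a%:~R / b%:~R : rat) \is a Num.int -> (b %| a)%Z.
Proof.
move=> b0 /intrP [k hk].
have : a%:~R = (k * b)%:~R :> rat by rewrite intrM -hk mulfVK ?intr_eq0.
by move/intr_inj => ->; apply: dvdz_mull; apply: dvdzz.
Qed.

Lemma coprime_fact q d : prime q -> (d < q)%N -> coprime q d`!.
Proof.
move=> pq; elim: d => [|d IH] hd; first by rewrite coprimen1.
rewrite factS coprimeMr IH ?(ltnW hd) // andbT prime_coprime //.
by apply/negP => /dvdn_leq => /(_ isT); lia.
Qed.

Lemma KEY (d : nat) : exists D : nat, (0 < D)%N /\ forall (p : {poly rat}),
  (size p <= d.+1)%N ->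
  (exists (m : nat) (N : int), forall n : int, N <= n ->
      ((n%:~R : rat) ^+ m * p.[n%:~R]) \is a Num.int) ->
  forall i, ((D%:R : rat) * p`_i) \is a Num.int.
Proof.
pose DL := (d`! ^ d)%N; pose M := (d.+1)`!; pose C := (M ^ d * DL)%N.
have DL0 : (0 < DL)%N by rewrite expn_gt0 fact_gt0.
have C0 : (0 < C)%N by rewrite muln_gt0 DL0 expn_gt0 fact_gt0.
exists (DL * C)%N; split; first by rewrite muln_gt0 DL0 C0.
move=> p sp [m [N hN]].
have [q [a a0 pE]] := rat_poly_scale p.
pose z (u : int) := q.[u].
have pz (u : int) : p.[u%:~R] = (z u)%:~R / a%:~R.
  rewrite pE hornerZ /z -horner_map /= mulrC //.
have hz (u : int) : N <= u -> (a %| u ^+ m * z u)%Z.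
  move=> /hN; rewrite pz mulrA -rmorphXn -rmorphM /=.
  exact: int_divz.
have hB (n : int) : N <= n -> (a %| C%:Z * z n)%Z.
  move=> Nn; rewrite /dvdz unfold_in /= abszM absz_nat.
  have A0 : (0 < `|a|%N)%N by rewrite absz_gt0.
  apply/dvdn_partP => // r; rewrite mem_primes => /and3P [pr _ _].
  set Q := ((`|a|)`_r)%N.
  have QA : (Q %| `|a|%N)%N by apply: dvdn_part.
  have h1 (u : int) : N <= u -> ~~ (r %| `|u|%N)%N -> (Q %| `|z u|%N)%N.
    move=> Nu ru; have := dvdn_trans QA (hz u Nu).
    rewrite abszM abszX Gauss_dvdr // /Q p_part; apply: coprimeXl.
    by apply: coprimeXr; rewrite prime_coprime.
  have h2 (s : int) : s != 0 ->
      (forall j : nat, (j <= d)%N -> (Q %| `|z (n + 1 + s * j%:Z)%R|%N)%N) ->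
      (Q %| `|s|%N ^ d * DL * `|z n|%N)%N.
    move=> s0 hj.
    have Q0 : (0 < Q)%N by rewrite /Q part_gt0.
    pose K := ((a%:~R / Q%:R) : rat) *: p.
    have Kz (u : int) : K.[u%:~R] = (z u)%:~R / (Q%:Z)%:~R.
      rewrite hornerZ pz; field.
      by rewrite intr_eq0 a0 /= pnatr_eq0 -lt0n Q0.
    have := @LG d (n + 1) s K s0.
    move=> /(_ (leq_trans (size_scale_leq _ _) sp)).
    have hK : forall j : nat, (j <= d)%N -> K.[(n + 1 + s * j%:Z)%:~R] \is a Num.int.
      move=> j jd; rewrite Kz; apply: divz_int; first by rewrite eqz_nat -lt0n Q0.
      exact: hj.
    move=> /(_ hK) hP.
    have := rpred_horner hP (intr_int rat n).
    rewrite hornerZ Kz mulrA -intrM => /int_divz.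
    rewrite eqz_nat -lt0n Q0 => /(_ isT).
    by rewrite /dvdz unfold_in /= !abszM abszX !absz_nat.
  have r1 : (1 < r)%N by apply: prime_gt1.
  have rn1 (v w : int) : (r %| `|v|%N)%N -> (r %| `|(v + w)%R|%N)%N -> (r %| `|w|%N)%N.
    move=> h h'; have -> : w = (v + w) - v by ring.
    have : ((v + w) - v) \in dvdz r by apply: rpredB.
    by [].
  case: (boolP (r %| `|n|%N)%N) => rn; last by apply: dvdn_mull; apply: h1.
  case: (leqP r d.+1) => rd.
    have hh : (r%:Z != 0) by rewrite eqz_nat -lt0n prime_gt0.
    have hj : forall j : nat, (j <= d)%N -> (Q %| `|z (n + 1 + r%:Z * j%:Z)%R|%N)%N.
      move=> j jd; apply: h1; first by nia.
      have hrj : (r %| `|(r%:Z * j%:Z)%R|%N)%N by rewrite abszM dvdn_mulr.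
      apply/negP; rewrite -addrA => /(rn1 _ _ rn); rewrite addrC => /(rn1 _ _ hrj).
      rewrite dvdn1 => /eqP r1'; lia.
    have := h2 _ hh hj.
    move=> hQ; apply: dvdn_trans hQ _; rewrite absz_nat.
    apply: dvdn_mul => //; rewrite /C; apply: dvdn_mul => //.
    apply: dvdn_exp2r; apply: dvdn_fact.
    by rewrite prime_gt0.
  have hj : forall j : nat, (j <= d)%N -> (Q %| `|z (n + 1 + 1 * j%:Z)%R|%N)%N.
    move=> j jd; apply: h1; first by lia.
    apply/negP; rewrite -addrA mul1r => /(rn1 _ _ rn).
    rewrite -(PoszD 1 j) absz_nat => /dvdn_leq; lia.
  have hQ := h2 1 isT hj.
  have cop : coprime Q DL.
    rewrite /Q p_part; apply: coprimeXl.
    by apply: coprimeXr; apply: coprime_fact => //; lia.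
  move: hQ; rewrite absz_nat exp1n mul1n Gauss_dvdr //.
  exact: dvdn_mull.
have hj : forall j : nat, (j <= d)%N -> (C%:R *: p).[(N + 1 * j%:Z)%:~R] \is a Num.int.
  move=> j jd; rewrite hornerZ mul1r pz mulrA.
  rewrite -[(C%:R : rat)]/((C%:Z)%:~R) -intrM; apply: divz_int => //; apply: hB; lia.
have := @LG d N 1 (C%:R *: p) isT (leq_trans (size_scale_leq _ _) sp) hj.
move=> /polyOverP hP i; have := hP i.
by rewrite !coefZ expr1n mul1r mulrA natrM.
Qed.


Definition asb (P : Prop) : bool := if excluded_middle_informative P then true else false.
Lemma asbP (P : Prop) : reflect P (asb P).
Proof. by rewrite /asb; case: excluded_middle_informative => h; constructor. Qed.

Section Abs.
Variables (V : zmodType) (P : V -> Prop) (S : nat -> V -> Prop) (phi : nat -> V -> rat).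
Hypotheses (S0 : forall j, S j 0)
  (SB : forall j x y, S j x -> S j y -> S j (x - y))
  (phiB : forall j x y, S j x -> S j y -> phi j (x - y) = phi j x - phi j y)
  (Smono : forall j x, S j x -> S j.+1 x)
  (phivan : forall j x, S j x -> phi j.+1 x = 0)
  (ker0 : forall x, S 0 x -> phi 0 x = 0 -> x = 0)
  (kerS : forall j x, S j.+1 x -> phi j.+1 x = 0 -> S j x)
  (disc : forall j, exists D : nat, (0 < D)%N /\ forall x, S j x -> (D%:R * phi j x) \is a Num.int)
  (nz : forall j, exists x, S j x /\ phi j x != 0)
  (PS : forall x, P x <-> exists j, S j x).

Lemma phi0 j : phi j 0 = 0.
Proof. by have := phiB (S0 j) (S0 j); rewrite subrr => ->; rewrite subrr. Qed.
Lemma SN j x : S j x -> S j (- x).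
Proof. by move=> h; rewrite -sub0r; apply: SB. Qed.
Lemma phiN j x : S j x -> phi j (- x) = - phi j x.
Proof. by move=> h; rewrite -sub0r phiB // phi0 sub0r. Qed.
Lemma SD j x y : S j x -> S j y -> S j (x + y).
Proof. by move=> hx hy; rewrite -[y]opprK; apply: SB => //; apply: SN. Qed.
Lemma phiD j x y : S j x -> S j y -> phi j (x + y) = phi j x + phi j y.
Proof.
move=> hx hy; have := phiB hx (SN hy); rewrite opprK => ->.
by rewrite phiN // opprK.
Qed.
Lemma SMn j x n : S j x -> S j (x *+ n) /\ phi j (x *+ n) = phi j x *+ n.
Proof.
move=> hx; elim: n => [|n [h1 h2]]; first by rewrite !mulr0n phi0; split.
by rewrite !mulrS; split; [apply: SD | rewrite phiD // h2].
Qed.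
Lemma SMz j x k : S j x -> S j (x *~ k) /\ phi j (x *~ k) = phi j x *~ k.
Proof.
move=> hx; case: k => n /=; first exact: SMn.
have [h1 h2] := SMn (n.+1) hx.
by rewrite /intmul; split; [apply: SN | rewrite phiN // h2].
Qed.

Lemma gen j : exists e, [/\ S j e, phi j e != 0 &
   forall x, S j x -> exists k : int, phi j x = phi j e *~ k].
Proof.
have [D [D0 hD]] := disc j.
have [x0 [Sx0 nx0]] := nz j.
have Dn0 : (D%:R : rat) != 0 by rewrite pnatr_eq0 -lt0n.
pose Q n := asb ((0 < n)%N /\ exists x, S j x /\ D%:R * phi j x = n%:R).
have exQ : exists n, Q n.
  have /intrP [k hk] := hD _ Sx0.
  have k0 : k != 0.
    by apply: contra nx0 => /eqP k0; move/eqP: hk; rewrite k0 mulr0z mulf_eq0 (negPf Dn0).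
  exists `|k|%N; apply/asbP; split; first by rewrite absz_gt0.
  case: (ger0P k) => hk0.
    by exists x0; split => //; rewrite hk -[k]gez0_abs //.
  exists (- x0); split; first exact: SN.
  by rewrite phiN // mulrN hk natr_absz ltr0_norm // rmorphN.
case: (ex_minnP exQ) => g /asbP [g0 [e [Se he]]] gmin.
exists e; split => //.
  apply/eqP => h0; move: he; rewrite h0 mulr0 => /esym/eqP; rewrite pnatr_eq0 => /eqP g00.
  by rewrite g00 in g0.
move=> x Sx.
have /intrP [k hk] := hD _ Sx.
have gz0 : (g%:Z != 0) by rewrite eqz_nat -lt0n.
pose qq := (k %/ g%:Z)%Z; pose rr := (k %% g%:Z)%Z.
have hkq : k = qq * g%:Z + rr by apply: divz_eq.
have rr0 : 0 <= rr by apply: modz_ge0.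
have rrg : rr < g%:Z by apply: ltz_pmod; rewrite ltz_nat.
have [Sy phy] := SMz qq Se.
have Sxy := SB Sx Sy.
have hy : D%:R * phi j (x - e *~ qq) = rr%:~R.
  rewrite phiB // phy mulrBr hk -(mulrzr (phi j e)) mulrA he [k]hkq.
  rewrite -[(g%:R : rat)]/((g%:Z)%:~R) -!intrM -intrB; congr intmul; ring.
have rrz : rr = 0.
  case: (ltrP 0 rr) => rpos; last by apply/eqP; rewrite eq_le rpos rr0.
  exfalso.
  have : Q `|rr|%N.
    apply/asbP; split; first by rewrite absz_gt0 gt_eqF.
    exists (x - e *~ qq); split => //; rewrite hy.
    by rewrite -[rr]gez0_abs ?ltW.
  move/gmin; lia.
exists qq.
apply: (mulfI Dn0); rewrite hk [k]hkq rrz addr0 intrM mulrC.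
rewrite -(mulrzr (phi j e)) mulrA he.
by [].
Qed.

Lemma Sle i j x : (i <= j)%N -> S i x -> S j x.
Proof.
move=> /subnK <-; elim: (j - i)%N => [|k IH] //= h.
by rewrite addSn; apply: Smono; apply: IH.
Qed.

Lemma van i j x : (i < j)%N -> S i x -> phi j x = 0.
Proof.
case: j => // j ij Sx; apply: phivan; exact: Sle Sx.
Qed.

Definition e j := proj1_sig (constructive_indefinite_description _ (gen j)).
Lemma eP j : [/\ S j (e j), phi j (e j) != 0 &
   forall x, S j x -> exists k : int, phi j x = phi j (e j) *~ k].
Proof. exact: (proj2_sig (constructive_indefinite_description _ (gen j))). Qed.

Lemma e_inj i j : e i = e j -> i = j.
Proof.
wlog : i j / (i < j)%N.
  move=> W h; case: (ltngtP i j) => ij //; first exact: W.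
  by apply/esym/W.
move=> ij h; have [S1 n1 _] := eP j; have [S2 _ _] := eP i.
by move: n1; rewrite -h (van ij S2) eqxx.
Qed.

Lemma sumS j (s : seq V) (c : V -> int) : (forall b, b \in s -> S j b) ->
  S j (\sum_(b <- s) b *~ c b) /\ phi j (\sum_(b <- s) b *~ c b) = \sum_(b <- s) phi j b *~ c b.
Proof.
elim: s => [|a s IH] h; first by rewrite !big_nil phi0.
have [h1 h2] : S j (\sum_(b <- s) b *~ c b) /\ phi j (\sum_(b <- s) b *~ c b) = \sum_(b <- s) phi j b *~ c b.
  by apply: IH => b bs; apply: h; rewrite inE bs orbT.
have Sa : S j a by apply: h; rewrite inE eqxx.
have [Sa1 Sa2] := SMz (c a) Sa.
by rewrite !big_cons; split; [apply: SD | rewrite phiD // Sa2 h2].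
Qed.

Lemma sum_pred1 (s : seq V) (t : V) (F : V -> V) : uniq s ->
  \sum_(b <- s | b == t) F b = if t \in s then F t else 0.
Proof.
move=> us; case: ifP => ts.
  by rewrite -big_filter (@filter_pred1_uniq _ s t) // big_seq1.
by rewrite big1_seq // => b /andP [/eqP -> bs]; rewrite bs in ts.
Qed.

Lemma indep J : forall (s : seq V) (c : V -> int), uniq s ->
  (forall b, b \in s -> exists i, (i < J)%N /\ b = e i) ->
  \sum_(b <- s) b *~ c b = 0 -> forall b, b \in s -> c b = 0.
Proof.
elim: J => [|J IH] s c us hs hsum.
  by move=> b /hs [i []].
pose t := e J.
have key : forall b, b \in s -> b != t -> exists i, (i < J)%N /\ b = e i.
  move=> b /hs [i [iJ ->]] ne; exists i; split => //.
  rewrite ltnS leq_eqVlt in iJ; case/orP: iJ => // /eqP ij.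
  by rewrite ij eqxx in ne.
pose s' := [seq b <- s | b != t].
have hs' : forall b, b \in s' -> exists i, (i < J)%N /\ b = e i.
  by move=> b; rewrite mem_filter => /andP [bt bs]; apply: key.
have Ss' : forall b, b \in s' -> S J b.
  by move=> b /hs' [i [iJ ->]]; have [Si _ _] := eP i; apply: Sle Si; apply: ltnW.
have [Sr pr] := sumS c Ss'.
have pr0 : phi J (\sum_(b <- s') b *~ c b) = 0.
  rewrite pr big1_seq // => b /andP [_ /hs' [i [iJ ->]]].
  by have [Si _ _] := eP i; rewrite (van iJ Si) mul0rz.
have split_s : \sum_(b <- s) b *~ c b =
    (if t \in s then t *~ c t else 0) + \sum_(b <- s') b *~ c b.
  by rewrite (bigID (fun b => b == t)) /= sum_pred1 // big_filter.
have ct : t \in s -> c t = 0.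
  move=> ts; move: hsum; rewrite split_s ts => h.
  have [St nt _] := eP J.
  have [St1 St2] := SMz (c t) St.
  have := congr1 (phi J) h; rewrite phiD // St2 pr0 addr0 phi0.
  move/eqP; rewrite -mulrzr mulf_eq0 (negPf nt) /= intr_eq0 => /eqP //.
have rest0 : \sum_(b <- s') b *~ c b = 0.
  move: hsum; rewrite split_s; case: ifP => ts; last by rewrite add0r.
  by rewrite ct // mulr0z add0r.
have IH' := IH s' c (filter_uniq _ us) hs' rest0.
move=> b bs; case: (eqVneq b t) => [bt | bt]; first by rewrite bt; apply: ct; rewrite -bt.
by apply: IH'; rewrite mem_filter bt bs.
Qed.

Lemma ins (t : V) (k : int) (s : seq V) (c : V -> int) : uniq s ->
  exists s' (c' : V -> int), [/\ uniq s', (forall b, b \in s' -> b \in s \/ b = t) &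
    \sum_(b <- s') b *~ c' b = \sum_(b <- s) b *~ c b + t *~ k].
Proof.
move=> us; case: (boolP (t \in s)) => ts.
  exists s, (fun b => c b + (if b == t then k else 0)); split => //; first by move=> b; left.
  rewrite (eq_bigr (fun b => b *~ c b + b *~ (if b == t then k else 0))); last by move=> b _; rewrite mulrzDr.
  rewrite big_split /=; congr (_ + _).
  rewrite (bigD1_seq t) //= eqxx big1_seq ?addr0 // => b /andP [bt _].
  by rewrite (negPf bt).
exists (t :: s), (fun b => if b == t then k else c b); split.
- by rewrite /= ts.
- by move=> b; rewrite inE => /orP [/eqP -> | ->]; [right | left].
rewrite big_cons eqxx addrC; congr (_ + _).
rewrite big_seq_cond [RHS]big_seq_cond; apply: eq_bigr => b /andP [bs _].
by case: eqP => // bt; move: bs; rewrite bt (negPf ts).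
Qed.

Lemma span j : forall x, S j x -> exists s (c : V -> int),
  [/\ uniq s, (forall b, b \in s -> exists i, b = e i) & x = \sum_(b <- s) b *~ c b].
Proof.
elim: j => [|j IH] x Sx.
  have [Se _ ge] := eP 0; have [k hk] := ge _ Sx.
  have [Sy1 Sy2] := SMz k Se.
  have y0 : x - e 0 *~ k = 0 by apply: ker0; [apply: SB | rewrite phiB // Sy2 hk subrr].
  have [s' [c' [us' hs' hsum]]] := @ins (e 0) k [::] (fun _ => 0) isT.
  exists s', c'; split => //.
    by move=> b /hs' [] //; exists 0%N.
  by rewrite hsum big_nil add0r; apply/eqP; rewrite -subr_eq0 y0.
have [Se _ ge] := eP j.+1; have [k hk] := ge _ Sx.
have [Sy1 Sy2] := SMz k Se.
have Sy : S j (x - e j.+1 *~ k) by apply: kerS; [apply: SB | rewrite phiB // Sy2 hk subrr].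
have [s [c [us hs ysum]]] := IH _ Sy.
have [s' [c' [us' hs' hsum]]] := ins (e j.+1) k c us.
exists s', c'; split => //.
  by move=> b /hs' [/hs // | ->]; exists j.+1.
by rewrite hsum -ysum subrK.
Qed.

Lemma bound (s : seq V) : (forall b, b \in s -> exists i, b = e i) ->
  exists J, forall b, b \in s -> exists i, (i < J)%N /\ b = e i.
Proof.
elim: s => [|a s IH] h; first by exists 0%N.
have [J hJ] : exists J, forall b, b \in s -> exists i, (i < J)%N /\ b = e i.
  by apply: IH => b bs; apply: h; rewrite inE bs orbT.
have [i0 ->] : exists i, a = e i by apply: h; rewrite inE eqxx.
exists (maxn J i0.+1) => b; rewrite inE => /orP [/eqP -> | /hJ [i [iJ ->]]].
  by exists i0; split => //; rewrite leq_max leqnn orbT.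
by exists i; split => //; rewrite leq_max iJ.
Qed.

Theorem abs_free : free_abelian P.
Proof.
exists (fun b => exists i, b = e i); split; [|split].
- move=> b [i ->]; apply/PS; exists i; by have [] := eP i.
- move=> s c us hs hsum b bs.
  have [J hJ] := bound hs.
  exact: (indep us hJ hsum).
- move=> x /PS [j Sx]; have [s [c [_ hs ->]]] := span Sx.
  by exists s, c.
Qed.

End Abs.


Notation tf := (@FracField.tofrac _).
Notation TX := (tf ('X : {poly rat}) : Qt).

Lemma TX0 : TX != 0.
Proof. by rewrite tofrac_eq0 polyX_eq0. Qed.
Lemma TXn0 J : TX ^+ J != 0.
Proof. by rewrite expf_neq0 // TX0. Qed.

Lemma tf_inj : injective (tf : {poly rat} -> Qt).
Proof. by move=> p q /eqP; rewrite tofrac_eq => /eqP. Qed.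

Lemma rep_uniq J p q : tf p / TX ^+ J = tf q / TX ^+ J -> p = q.
Proof. by move=> /(mulIf (invr_neq0 (TXn0 J))); apply: tf_inj. Qed.

Definition rep (J : nat) (x : Qt) : {poly rat} :=
  match excluded_middle_informative (exists p, x = tf p / TX ^+ J) with
  | left h => proj1_sig (constructive_indefinite_description _ h)
  | right _ => 0 end.

Lemma repP J x p : x = tf p / TX ^+ J -> rep J x = p.
Proof.
rewrite /rep; case: excluded_middle_informative => [h|h] e.
  case: (constructive_indefinite_description _ h) => p' /= e'.
  by apply: (@rep_uniq J); rewrite -e -e'.
by exfalso; apply: h; exists p.
Qed.

Lemma numD f g : numerical f -> numerical g -> numerical (f + g).
Proof.
move=> [N1 h1] [N2 h2]; exists (Num.max N1 N2) => n hn.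
rewrite hornerD rpredD //; [apply: h1 | apply: h2]; apply: le_trans hn;
  by rewrite ?le_max lexx ?orbT.
Qed.
Lemma numN f : numerical f -> numerical (- f).
Proof. by move=> [N h]; exists N => n hn; rewrite hornerN rpredN h. Qed.
Lemma numXM k f : numerical f -> numerical ('X^k * f).
Proof.
move=> [N h]; exists N => n hn; rewrite hornerM hornerXn rpredM ?h //.
by rewrite rpredX // intr_int.
Qed.
Lemma num1 : numerical 1.
Proof. by exists 0 => n _; rewrite hornerC rpred1. Qed.
Lemma num0 : numerical 0.
Proof. by exists 0 => n _; rewrite horner0 rpred0. Qed.

Lemma inH0 : inH 0.
Proof. by exists 0, 0%N; split; [exact: num0 | rewrite tofrac0 mul0r]. Qed.

Lemma inHB x y : inH x -> inH y -> inH (x - y).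
Proof.
move=> [f [k [nf ->]]] [g [l [ng ->]]].
exists ('X^l * f - 'X^k * g), (k + l)%N; split.
  by apply: numD; [apply: numXM | apply: numN; apply: numXM].
rewrite tofracB !tofracM !tofracXn exprD; exact: fr1 TX0.
Qed.

Definition Sj (j : nat) (x : Qt) : Prop :=
  inH x /\ exists p : {poly rat}, (size p <= j.+1)%N /\ x = tf p / TX ^+ (j./2).

Definition phij (j : nat) (x : Qt) : rat := (rep (j./2) x)`_(if odd j then j else 0%N).

Lemma parity j : {J | j = J.*2} + {J | j = J.*2.+1}.
Proof.
have := odd_double_half j; case: (odd j) => /= h.
  by apply: inr; exists j./2; rewrite -[in LHS]h add1n.
by apply: inl; exists j./2; rewrite -[in LHS]h add0n.
Qed.

Lemma half2 J : (J.*2)./2 = J. Proof. exact: doubleK. Qed.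
Lemma half2S J : (J.*2.+1)./2 = J. Proof. by rewrite /= uphalf_double. Qed.
Lemma odd2 J : odd J.*2 = false. Proof. exact: odd_double. Qed.
Lemma odd2S J : odd J.*2.+1 = true. Proof. by rewrite /= odd_double. Qed.

Lemma shiftX J p : tf p / TX ^+ J = tf (p * 'X) / TX ^+ J.+1.
Proof.
rewrite tofracM exprSr; exact: fr2 TX0.
Qed.

Lemma half2SS J : (J.*2.+2)./2 = J.+1. Proof. by rewrite -doubleS half2. Qed.
Lemma odd2SS J : odd J.*2.+2 = false. Proof. by rewrite /= odd_double. Qed.

Lemma size_top (p : {poly rat}) n : (size p <= n.+1)%N -> p`_n = 0 -> (size p <= n)%N.
Proof.
move=> h1 h2; rewrite leqNgt; apply/negP => h3.
have e : size p = n.+1 by lia.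
have : lead_coef p != 0 by rewrite lead_coef_eq0 -size_poly_gt0 e.
by rewrite lead_coefE e /= h2 eqxx.
Qed.

Theorem theorem1p4 : free_abelian inH.
Proof.
apply: (@abs_free _ inH Sj phij).
- move=> j; split; first exact: inH0.
  by exists 0; split; [rewrite size_poly0 | rewrite tofrac0 mul0r].
- move=> j x y [hx [p [sp ex]]] [hy [q [sq ey]]]; split; first exact: inHB.
  exists (p - q); split; last by rewrite ex ey tofracB mulrBl.
  by apply: leq_trans (size_polyD _ _) _; rewrite size_polyN geq_max sp sq.
- move=> j x y [hx [p [sp ->]]] [hy [q [sq ->]]].
  rewrite /phij -mulrBl -tofracB !(repP (erefl _)).
  by rewrite coefB.
- move=> j x [hx [p [sp ex]]]; split => //.
  case: (parity j) => [[J eJ]|[J eJ]]; rewrite eJ in sp ex *; clear eJ.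
    by exists p; split; [lia | rewrite ex half2 half2S].
  exists (p * 'X); split.
    by apply: leq_trans (size_polyMleq _ _) _; rewrite size_polyX; lia.
  by rewrite ex half2S half2SS shiftX.
- move=> j x [hx [p [sp ex]]]; rewrite /phij.
  case: (parity j) => [[J eJ]|[J eJ]]; rewrite eJ in sp ex *; clear eJ.
    rewrite half2S odd2S; rewrite half2 in ex.
    rewrite (repP ex); exact: nth_default.
  rewrite half2SS odd2SS; rewrite half2S shiftX in ex.
  by rewrite (repP ex) coefMX.
- move=> x [hx [p [sp ex]]]; rewrite /phij /= (repP ex) => h0.
  by rewrite ex (size1_polyC sp) h0 tofrac0 mul0r.
- move=> j x [hx [p [sp ex]]] h0; split => //.
  case: (parity j) => [[J eJ]|[J eJ]]; rewrite eJ in sp ex h0 *; clear eJ.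
    rewrite /phij half2S odd2S in h0; rewrite half2S in ex.
    rewrite (repP ex) in h0.
    by exists p; split; [apply: size_top | rewrite half2].
  rewrite /phij half2SS odd2SS in h0; rewrite half2SS in ex.
  rewrite (repP ex) in h0.
  have : root p 0 by rewrite /root horner_coef0 h0.
  case/factor_theorem => q eq; rewrite subr0 in eq.
  exists q; split; last by rewrite half2S shiftX -eq.
  have [->|q0] := eqVneq q 0; first by rewrite size_poly0.
  by move: sp; rewrite eq size_mulX //; lia.
- move=> j; have [D [D0 hD]] := KEY j; exists D; split => //.
  move=> x [[f [k [[N nf] ef]]] [p [sp ex]]].
  rewrite /phij (repP ex); apply: hD => //.
  exists k, N => n hn.
  have e1 := fr3 TX0 (etrans (esym ex) ef).
  rewrite -!tofracXn -!tofracM in e1; have e2 := tf_inj e1.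
  have := congr1 (fun r => r.[n%:~R]) e2; rewrite /= !hornerM !hornerXn mulrC => ->.
  by rewrite rpredM ?nf // rpredX // intr_int.
- move=> j; exists (tf 'X^(if odd j then j else 0%N) / TX ^+ j./2); split.
    split.
      exists 'X^(if odd j then j else 0%N), j./2; split => //.
      rewrite -[X in numerical X]mulr1; apply: numXM; exact: num1.
    exists 'X^(if odd j then j else 0%N); split => //.
    by rewrite size_polyXn; case: (odd j).
  by rewrite /phij (repP (erefl _)) coefXn eqxx oner_neq0.
- move=> x; split; last by case=> j [].
  move=> hx; have hx' := hx; case: hx' => f [k [nf ex]].
  exists ((k + size f).*2); split => //; exists ('X^(size f) * f); split.
    apply: leq_trans (size_polyMleq _ _) _; rewrite size_polyXn; lia.
  by rewrite half2 ex tofracM tofracXn exprD; apply: fr4 TX0.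
Qed.
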